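(* Let $\alpha\ge 4$, let $(x,y)$ be an optimal solution of the LP-relaxation, and let $N'$ and the clusters $M_l$ ($l\in N'$) be produced by the clustering procedure below. Then for every $l\in N'$, $Z_l:=\sum_{j\in M_l}y_j\ge\frac{\alpha-1}{\alpha}$.
   Context: Setting: finite set $N$ of locations, capacity $M>0$, demands $d_j\ge0$, integer $k\ge1$, metric costs $c_{ij}$ on $N$ (nonnegative, $c_{ii}=0$, symmetric, triangle inequality). LP-relaxation: minimize $\sum_{i,j}d_jc_{ij}x_{ij}$ s.t. $\sum_{i}x_{ij}=1$ ($j\in N$), $\sum_j d_jx_{ij}\le My_i$ ($i\in N$), $\sum_i y_i\le k$, $0\le x_{ij}\le y_i$, $0\le y_i\le1$. For $j\in N$ let $C_j=\sum_{i\in N}c_{ij}x_{ij}$. Clustering procedure: order the locations as $1,\dots,n$ so that $C_1\le\dots\le C_n$ (ties arbitrary); start with $N'=\emptyset$; for $j=1,\dots,n$ in turn, if there is no $l\in N'$ with $c_{lj}\le 2\alpha C_j$, add $j$ to $N'$. Then for each $j\in N$ let $N'(j)$ be a closest element of $N'$ to $j$ (ties arbitrary), and set $M_l=\{j\in N: N'(j)=l\}$ for $l\in N'$. *)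

(* Defs.v *)
From HB Require Import structures.
From mathcomp Require Import all_boot all_order all_algebra.
Set Implicit Arguments. Unset Strict Implicit. Unset Printing Implicit Defensive.
Import Order.TTheory GRing.Theory Num.Theory.
Local Open Scope ring_scope.

Section Defs.
Variables (R : realFieldType) (N : finType).

Definition is_metric (c : N -> N -> R) : Prop :=
  [/\ forall i j, 0 <= c i j, forall i, c i i = 0,
      forall i j, c i j = c j i & forall i j l, c i l <= c i j + c j l].

Definition lp_feasible (M : R) (d : N -> R) (k : nat)
    (x : N -> N -> R) (y : N -> R) : Prop :=
  [/\ forall j, \sum_(i : N) x i j = 1,
      forall i, \sum_(j : N) d j * x i j <= M * y i,
      \sum_(i : N) y i <= k%:R,
      forall i j, 0 <= x i j /\ x i j <= y i
    & forall i, 0 <= y i /\ y i <= 1].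

Definition lp_cost (c : N -> N -> R) (d : N -> R) (x : N -> N -> R) : R :=
  \sum_(i : N) \sum_(j : N) d j * c i j * x i j.

Definition lp_optimal (c : N -> N -> R) (M : R) (d : N -> R) (k : nat)
    (x : N -> N -> R) (y : N -> R) : Prop :=
  lp_feasible M d k x y /\
  forall x' y', lp_feasible M d k x' y' -> lp_cost c d x <= lp_cost c d x'.

Definition Cj (c : N -> N -> R) (x : N -> N -> R) (j : N) : R :=
  \sum_(i : N) c i j * x i j.

Definition valid_order (C : N -> R) (s : seq N) : Prop :=
  perm_eq s (enum N) /\ sorted (fun a b => C a <= C b) s.

Fixpoint greedy (c : N -> N -> R) (C : N -> R) (alpha : R)
    (acc : seq N) (s : seq N) : seq N :=
  match s with
  | [::] => acc
  | j :: s' =>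
      if has (fun l => c l j <= 2 * alpha * C j) acc
      then greedy c C alpha acc s'
      else greedy c C alpha (rcons acc j) s'
  end.

Definition centers (c : N -> N -> R) (C : N -> R) (alpha : R) (s : seq N) :=
  greedy c C alpha [::] s.

(* f j = N'(j): a closest element of N' to j (ties arbitrary) *)
Definition closest_assignment (c : N -> N -> R) (Nprime : seq N)
    (f : N -> N) : Prop :=
  forall j, f j \in Nprime /\ forall l, l \in Nprime -> c (f j) j <= c l j.

End Defs.

(* Main.v *)
Require Import Defs.
From HB Require Import structures.
From mathcomp Require Import all_boot all_order all_algebra.
From mathcomp Require Import lra.
Import Order.TTheory GRing.Theory Num.Theory.
Local Open Scope ring_scope.

Section Greedy.
Variables (R : realFieldType) (N : finType) (c : N -> N -> R) (C : N -> R)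
  (alpha : R).

Definition good a b :=
  ((C a <= C b) && (2 * alpha * C b < c a b)) ||
  ((C b <= C a) && (2 * alpha * C a < c b a)).

Lemma greedy_good s acc :
  sorted (fun a b => C a <= C b) s ->
  (forall a b, a \in acc -> b \in s -> C a <= C b) ->
  (forall a b, a \in acc -> b \in acc -> a != b -> good a b) ->
  forall a b, a \in greedy c C alpha acc s -> b \in greedy c C alpha acc s ->
    a != b -> good a b.
Proof.
elim: s acc => [|j s IH] acc /= Hs Hab Hg; first exact: Hg.
have [Hall Hs'] : all (fun b => C j <= C b) s /\ sorted (fun a b => C a <= C b) s.
  move: Hs; rewrite path_sortedE; first by case/andP.
  by move=> ? ? ? ? ?; apply: le_trans; eassumption.
move/allP: Hall => Hall.
case: ifP => Hh.
- apply: (IH acc Hs') => // a b Ha Hb; apply: Hab => //; rewrite inE Hb orbT //.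
- apply: (IH (rcons acc j) Hs').
  + move=> a b; rewrite mem_rcons inE => /orP [/eqP->|Ha] Hb.
      exact: Hall.
    apply: Hab => //; rewrite inE Hb orbT //.
  + have /hasPn Hn : ~~ has (fun l => c l j <= 2 * alpha * C j) acc by rewrite Hh.
    move=> a b; rewrite !mem_rcons !inE => /orP[/eqP->|Ha] /orP[/eqP->|Hb] Hne.
    * by rewrite eqxx in Hne.
    * apply/orP; right; rewrite (Hab b j Hb) ?inE ?eqxx //=.
      by rewrite ltNge; apply: Hn.
    * apply/orP; left; rewrite (Hab a j Ha) ?inE ?eqxx //=.
      by rewrite ltNge; apply: Hn.
    * exact: Hg.
Qed.
End Greedy.

Theorem lemma1 (R : realFieldType) (N : finType) (M : R) (d : N -> R)
    (k : nat) (c : N -> N -> R) (alpha : R)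
    (x : N -> N -> R) (y : N -> R) (s : seq N) (f : N -> N) :
  0 < M -> (forall j, 0 <= d j) -> (1 <= k)%N -> is_metric c ->
  4 <= alpha ->
  lp_optimal c M d k x y ->
  valid_order (Cj c x) s ->
  closest_assignment c (centers c (Cj c x) alpha s) f ->
  forall l, l \in centers c (Cj c x) alpha s ->
    (alpha - 1) / alpha <= \sum_(j : N | f j == l) y j.
Proof.
move=> _ _ _ [h0 hdiag hsym htri] ha [[hx1 _ _ hxy hy] _] [_ Hsort] Hcl l Hl.
set C := Cj c x in Hsort Hcl Hl *.
have ha0 : 0 < alpha by lra.
have HG := @greedy_good R N c C alpha s [::] Hsort (fun a b H => ltac:(by [])) 
  (fun a b H => ltac:(by [])).
have Hnear : forall i, c i l <= alpha * C l -> f i = l.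
  move=> i Hi; apply/eqP; apply/negPn/negP => Hne.
  have [Hfi Hmin] := Hcl i.
  have H1 := Hmin l Hl.
  have H2 := htri l i (f i).
  have H3 : c l (f i) <= 2 * alpha * C l.
    have := hsym i (f i); have := hsym l i; lra.
  have Hne' : l != f i by rewrite eq_sym.
  have := HG l (f i) Hl Hfi Hne'.
  rewrite /good => /orP [/andP [Ha Hb]|/andP [Ha Hb]].
  + have : alpha * C l <= alpha * C (f i) by rewrite ler_wpM2l // ltW.
    lra.
  + rewrite hsym in Hb; lra.
set near := fun i => c i l <= alpha * C l.
set F := \sum_i (if ~~ near i then x i l else 0).
have Hsplit : 1 = \sum_i (if near i then x i l else 0) + F.
  rewrite -(hx1 l) /F -big_split /=; apply: eq_bigr => i _.
  by case: (near i); rewrite ?addr0 ?add0r.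
have Hlow : \sum_i (if near i then x i l else 0) <= \sum_(j | f j == l) y j.
  rewrite [X in _ <= X]big_mkcond /=; apply: ler_sum => i _.
  case Hn: (near i).
    by rewrite (Hnear i Hn) eqxx; case: (hxy i l).
  case: (f i == l); last by [].
  by case: (hy i).
have HF : F * alpha <= 1.
  have HC0 : 0 <= C l by apply: sumr_ge0 => i _; apply: mulr_ge0 => //; case: (hxy i l).
  have Hbound : F * alpha * C l <= C l.
    rewrite /F -mulrA mulr_suml /C /Cj; apply: ler_sum => i _.
    case Hn: (near i) => /=; first by rewrite mul0r; apply: mulr_ge0 => //; case: (hxy i l).
    move: Hn; rewrite /near => /negbT; rewrite -ltNge => Hlt.
    have [Hx0 _] := hxy i l.
    rewrite mulrC; apply: ler_wpM2r => //; exact: ltW.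
  case: (ltrgt0P (C l)) => HC.
  - have := HC; nra.
  - lra.
  - have Hz : forall i, c i l * x i l = 0.
      move=> i; apply: (@psumr_eq0P R N predT (fun i => c i l * x i l)) => //.
      by move=> i' _; apply: mulr_ge0 => //; case: (hxy i' l).
    suff -> : F = 0 by lra.
    rewrite /F big1 // => i _.
    case Hn: (near i) => //=.
    move: Hn; rewrite /near HC mulr0 => /negbT; rewrite -ltNge => Hlt.
    have := Hz i; move/eqP; rewrite mulf_eq0 => /orP [/eqP H|/eqP ->] //.
    by rewrite H ltxx in Hlt.
rewrite ler_pdivrMr //.
have : (alpha - 1) <= (1 - F) * alpha by lra.
move=> H; apply: le_trans H _; apply: ler_wpM2r; [exact: ltW | lra].
Qed.
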